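(* Let $s\geq2$ and $\phi\in\mathrm{Aut}_{s-1}(H)$. Then there exists a unique $\beta=(\beta_n)_{n\in\mathbb{Z}}\in k^{\mathbb{Z}}$ such that $\phi(x^ny^s)=x^ny^s+\beta_n(x^{n+s}-x^n)$ for all $n\in\mathbb{Z}$.
   Context: Let $k$ be a field and $0\neq q\in k$ not a root of unity. $H=k_q[x,x^{-1},y]$ is the $k$-algebra generated by $x,x^{-1},y$ with $xx^{-1}=x^{-1}x=1$, $yx=qxy$, a Hopf algebra with $\Delta(x)=x\otimes x$, $\Delta(x^{-1})=x^{-1}\otimes x^{-1}$, $\Delta(y)=y\otimes x+1\otimes y$, $\varepsilon(x)=1$, $\varepsilon(y)=0$; $\{x^ny^m:n\in\mathbb{Z},m\in\mathbb{N}\}$ is a $k$-basis. $H_0=\mathrm{span}\{x^n\}$, $H(m)=H_0y^m$. $\mathrm{Aut}_c(H)$ is the group of coalgebra automorphisms of $H$, and for $m\geq1$, $\mathrm{Aut}_m(H)=\{\phi\in\mathrm{Aut}_c(H):\phi(h)=h\text{ for all }h\in\sum_{i=0}^mH(i)\}$. *)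

(* Defs.v *)
From HB Require Import structures.
From mathcomp Require Import all_boot all_order all_algebra.
From mathcomp Require Import finmap.
From mathcomp.multinomials Require Import monalg.
Set Implicit Arguments. Unset Strict Implicit. Unset Printing Implicit Defensive.
Import Order.TTheory GRing.Theory Num.Theory.
Local Open Scope ring_scope.

(* Index (n, m) : int * nat stands for the basis monomial x^n y^m of
   H = k_q[x, x^-1, y]. *)
Definition idx : Type := (int * nat)%type.

Definition Hq (k : fieldType) : Type := {malg k[idx]}.
(* The underlying k-vector space of H (x) H, with basis
   {x^a y^b (x) x^c y^d}. *)
Definition HH (k : fieldType) : Type := {malg k[(idx * idx)%type]}.

Definition bas (k : fieldType) (a : idx) : Hq k := << (1 : k) *g a >>.
Definition basT (k : fieldType) (ab : idx * idx) : HH k := << (1 : k) *g ab >>.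

(* product of monomials in H:  (x^a y^b)(x^c y^d) = q^(b c) x^(a+c) y^(b+d),
   from y x = q x y. *)
Definition idxmul (a b : idx) : idx := (a.1 + b.1, (a.2 + b.2)%N).
Definition mulw (k : fieldType) (q : k) (a b : idx) : k := q ^ (a.2%:Z * b.1).

Definition mulT (k : fieldType) (q : k) (u v : HH k) : HH k :=
  \sum_(i <- msupp u) \sum_(j <- msupp v)
     << u@_i * v@_j * (mulw q i.1 j.1 * mulw q i.2 j.2)
        *g (idxmul i.1 j.1, idxmul i.2 j.2) >>.

Definition DeltaY (k : fieldType) : HH k :=
  basT k ((0, 1%N), (1, 0%N)) + basT k ((0, 0%N), (0, 1%N)).

(* Delta is the algebra map with Delta(x^(+-1)) = x^(+-1) (x) x^(+-1) and
   Delta(y) = y (x) x + 1 (x) y, so on the basis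
   Delta(x^n y^m) = Delta(x)^n Delta(y)^m = (x^n (x) x^n) * Delta(y)^m. *)
Definition Delta_bas (k : fieldType) (q : k) (a : idx) : HH k :=
  mulT q (basT k ((a.1, 0%N), (a.1, 0%N)))
         (iter a.2 (mulT q (DeltaY k)) (basT k ((0, 0%N), (0, 0%N)))).

Definition Delta (k : fieldType) (q : k) (h : Hq k) : HH k :=
  \sum_(a <- msupp h) h@_a *: Delta_bas q a.

Definition eps (k : fieldType) (h : Hq k) : k :=
  \sum_(a <- msupp h) h@_a * (a.2 == 0%N)%:R.

Definition tens (k : fieldType) (u v : Hq k) : HH k :=
  \sum_(a <- msupp u) \sum_(b <- msupp v) << u@_a * v@_b *g (a, b) >>.
Definition tmap (k : fieldType) (f g : Hq k -> Hq k) (T : HH k) : HH k :=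
  \sum_(ab <- msupp T) T@_ab *: tens (f (bas k ab.1)) (g (bas k ab.2)).

Definition is_coalg_aut (k : fieldType) (q : k) (phi : Hq k -> Hq k) : Prop :=
  [/\ (forall (c : k) (u v : Hq k), phi (c *: u + v) = c *: phi u + phi v),
      bijective phi,
      (forall h, Delta q (phi h) = tmap phi phi (Delta q h)) &
      (forall h, eps (phi h) = eps h)].

(* h lies in sum_(i=0)^m H(i), H(i) = H_0 y^i *)
Definition in_filt (k : fieldType) (m : nat) (h : Hq k) : Prop :=
  forall a, a \in msupp h -> (a.2 <= m)%N.

Definition in_Aut (k : fieldType) (q : k) (m : nat) (phi : Hq k -> Hq k) : Prop :=
  is_coalg_aut q phi /\ (forall h, in_filt m h -> phi h = h).

(* Main.v *)
Require Import Defs.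
From HB Require Import structures.
From mathcomp Require Import all_boot all_order all_algebra.
From mathcomp Require Import finmap.
From mathcomp.multinomials Require Import monalg.
From mathcomp Require Import ring zify.
From Stdlib Require Import FunctionalExtensionality.
Import Order.TTheory GRing.Theory Num.Theory.
Local Open Scope ring_scope.
Set Implicit Arguments. Unset Strict Implicit.


Section Gen.
Variable k : fieldType.
Variable K : choiceType.
Variable V : lmodType k.

Definition Lraw (F : K -> V) (g : {malg k[K]}) : V :=
  \sum_(a <- msupp g) g@_a *: F a.
Fact L_key : unit. Proof. exact: tt. Qed.
Definition L := locked_with L_key Lraw.
Lemma LE F g : L F g = \sum_(a <- msupp g) g@_a *: F a.
Proof. by rewrite /L; case: L_key. Qed.

Lemma L_w F g (d : {fset K}) : (msupp g `<=` d)%fset ->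
  L F g = \sum_(a <- d) g@_a *: F a.
Proof.
move=> sub; rewrite LE; apply: big_fset_incl => // x _ /mcoeff_outdom ->.
by rewrite scale0r.
Qed.

Lemma L_lin F c u v : L F (c *: u + v) = c *: L F u + L F v.
Proof.
pose d := (msupp u `|` msupp v)%fset.
have su : (msupp u `<=` d)%fset by apply: fsubsetUl.
have sv : (msupp v `<=` d)%fset by apply: fsubsetUr.
have suv : (msupp (c *: u + v) `<=` d)%fset.
  apply: fsubset_trans (msuppD_le _ _) _; apply/fsubUsetP; split=> //.
  exact: fsubset_trans (msuppZ_le _ _) su.
rewrite (L_w F suv) (L_w F su) (L_w F sv) scaler_sumr -big_split /=.
apply: eq_bigr => a _; by rewrite mcoeffD mcoeffZ scalerDl scalerA.
Qed.

Lemma L_add F u v : L F (u + v) = L F u + L F v.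
Proof. by have := L_lin F 1 u v; rewrite scale1r scale1r. Qed.

Lemma L0 F : L F 0 = 0.
Proof. by rewrite LE msupp0 big_seq_fset0. Qed.

Lemma L_scale F c u : L F (c *: u) = c *: L F u.
Proof. by rewrite -[c *: u]addr0 L_lin L0 addr0. Qed.

Lemma L_opp F u : L F (- u) = - L F u.
Proof. by have := L_scale F (-1) u; rewrite !scaleN1r. Qed.

Lemma L_sub F u v : L F (u - v) = L F u - L F v.
Proof. by rewrite L_add L_opp. Qed.

Lemma L_sum F n (f : 'I_n -> {malg k[K]}) :
  L F (\sum_(i < n) f i) = \sum_(i < n) L F (f i).
Proof. exact: (big_morph (L F) (L_add F) (L0 F)). Qed.

Lemma L_U F c a : L F << c *g a >> = c *: F a.
Proof.
rewrite LE msuppU; case: eqP => [->|_]; first by rewrite big_seq_fset0 scale0r.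
by rewrite big_seq_fset1 mcoeffUU.
Qed.

Lemma L_FD F1 F2 g : L (fun a => F1 a + F2 a) g = L F1 g + L F2 g.
Proof. by rewrite !LE -big_split /=; apply: eq_bigr => a _; rewrite scalerDr. Qed.

Lemma L_FN F g : L (fun a => - F a) g = - L F g.
Proof. by rewrite !LE -sumrN; apply: eq_bigr => a _; rewrite scalerN. Qed.

Lemma L_ext F1 F2 g : (forall a, F1 a = F2 a) -> L F1 g = L F2 g.
Proof. by move=> h; rewrite !LE; apply: eq_bigr => a _; rewrite h. Qed.

End Gen.

Section Gen2.
Variable k : fieldType.
Variable K K' : choiceType.

Lemma L_coef (F : K -> {malg k[K']}) g t :
  (L F g)@_t = \sum_(a <- msupp g) g@_a * (F a)@_t.
Proof.
rewrite LE (big_morph (mcoeff t) (@mcoeffD _ _ t) (@mcoeff0 _ _ t)).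
by apply: eq_bigr => a _; rewrite mcoeffZ.
Qed.

Lemma collapse (g : {malg k[K]}) (f : K -> k) a0 :
  (forall a, a != a0 -> f a = 0) ->
  \sum_(a <- msupp g) g@_a * f a = g@_a0 * f a0.
Proof.
move=> hf; rewrite (@big_fset_incl _ _ _ _ (msupp g) (msupp g `|` [fset a0])%fset).
- rewrite (big_fsetD1 a0) ?inE ?eqxx ?orbT //= big1_fset ?addr0 // => a.
  by rewrite !inE => /andP [/hf ->] *; rewrite mulr0.
- exact: fsubsetUl.
- by move=> x _ /mcoeff_outdom ->; rewrite mul0r.
Qed.

Lemma scaleU (a b : k) (m : K) : << a * b *g m >> = a *: << b *g m >>.
Proof.
by apply/malgP=> t; rewrite mcoeffZ !mcoeffU mulrnAr.
Qed.

Lemma scaleU2 (a b : k) (m : K) : << a * b *g m >> = a *: (b *: << 1 *g m >>).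
Proof.
apply/malgP=> t; rewrite !mcoeffZ !mcoeffU.
by case: eqP => _; rewrite ?mulr1n ?mulr0n ?mulr0 ?mulr1.
Qed.

Lemma scaleU3 (a b c : k) (m : K) : << a * b * c *g m >> = a *: (b *: << c *g m >>).
Proof.
apply/malgP=> t; rewrite !mcoeffZ !mcoeffU.
by case: eqP => _; rewrite ?mulr1n ?mulr0n ?mulr0 ?mulr1 ?mulrA.
Qed.

End Gen2.

Section Spec.
Variable k : fieldType.
Variable q : k.

Fact bT_key : unit. Proof. exact: tt. Qed.
Definition bT := locked_with bT_key (basT k).
Lemma basT_lock : basT k = bT. Proof. by rewrite /bT; case: bT_key. Qed.
Fact bH_key : unit. Proof. exact: tt. Qed.
Definition bH := locked_with bH_key (bas k).
Lemma bas_lock : bas k = bH. Proof. by rewrite /bH; case: bH_key. Qed.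

Lemma Delta_L h : Delta q h = L (Delta_bas q) h.
Proof. by rewrite LE. Qed.

Lemma tmap_L (f g : Hq k -> Hq k) T :
  tmap f g T = L (fun ab : idx * idx => tens (f (bH ab.1)) (g (bH ab.2))) T.
Proof. by rewrite LE /tmap bas_lock. Qed.

Lemma tens_L (u v : Hq k) :
  tens u v = L (fun a : idx => L (fun b : idx => bT (a, b)) v) u.
Proof.
rewrite /tens LE -basT_lock; apply: eq_bigr => a _; rewrite LE scaler_sumr.
by apply: eq_bigr => b _; rewrite /basT scaleU2.
Qed.

Fact G_key : unit. Proof. exact: tt. Qed.
Definition Graw (i j : idx * idx) : HH k :=
  << mulw q i.1 j.1 * mulw q i.2 j.2 *g (idxmul i.1 j.1, idxmul i.2 j.2) >>.
Definition G := locked_with G_key Graw.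

Lemma G_eq (a1 a2 b1 b2 : idx) :
  G (a1, a2) (b1, b2) =
  (q ^ (a1.2%:Z * b1.1) * q ^ (a2.2%:Z * b2.1)) *:
     bT ((a1.1 + b1.1, (a1.2 + b1.2)%N), (a2.1 + b2.1, (a2.2 + b2.2)%N)).
Proof.
rewrite /G -basT_lock; case: G_key; rewrite /Graw /basT -scaleU mulr1.
by [].
Qed.

Lemma mulT_L (u v : HH k) : mulT q u v = L (fun i => L (G i) v) u.
Proof.
rewrite /mulT LE; apply: eq_bigr => a _; rewrite LE scaler_sumr.
by apply: eq_bigr => b _; rewrite /G; case: G_key; rewrite /Graw scaleU3.
Qed.

Lemma L_bH (V : lmodType k) (F : idx -> V) a : L F (bH a) = F a.
Proof. by rewrite -bas_lock /bas L_U scale1r. Qed.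

Lemma L_bT (V : lmodType k) (F : idx * idx -> V) a : L F (bT a) = F a.
Proof. by rewrite -basT_lock /basT L_U scale1r. Qed.

Lemma bH_coef a b : (bH a)@_b = (a == b)%:R.
Proof. by rewrite -bas_lock /bas mcoeffU. Qed.

Lemma bT_coef a b : (bT a)@_b = (a == b)%:R.
Proof. by rewrite -basT_lock /basT mcoeffU. Qed.

Fixpoint d (m i : nat) : k :=
  match m with
  | 0 => (i == 0)%:R
  | m'.+1 => (if i is i'.+1 then d m' i' else 0) + q ^+ i * d m' i
  end.

Lemma d_gt m i : (m < i)%N -> d m i = 0.
Proof.
elim: m i => [|m IH] [|i] //= hi.
by rewrite IH // IH ?mulr0 ?addr0 // ltnW.
Qed.

Definition T (M i : nat) : HH k := bT ((0, i), (Posz i, (M - i)%N)).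

Definition Dpow m := iter m (mulT q (DeltaY k)) (basT k ((0, 0%N), (0, 0%N))).

Lemma Dpow_sum m : Dpow m = \sum_(i < m.+1) d m i *: T m i.
Proof.
elim: m => [|m IH].
  by rewrite big_ord1 /= scale1r /T basT_lock.
rewrite /Dpow iterS -/(Dpow m) IH mulT_L /DeltaY basT_lock L_add !L_bT.
rewrite !L_sum -big_split /=.
have -> : \sum_(i < m.+2) d m.+1 i *: T m.+1 i =
   \sum_(i < m.+2) ((if (i : nat) is i'.+1 then d m i' else 0) *: T m.+1 i)
   + \sum_(i < m.+2) ((q ^+ i * d m i) *: T m.+1 i).
  by rewrite -big_split /=; apply: eq_bigr => i _; rewrite -scalerDl.
rewrite [X in _ = X + _]big_ord_recl.
rewrite [X in _ = _ + X]big_ord_recr /=.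
rewrite [X in _ = X + _ + _]scale0r [X in _ = X + _]add0r.
rewrite [in X in _ + (_ + X)](d_gt (ltnSn m)) [in X in _ + (_ + X)]mulr0.
rewrite [in X in _ + (_ + X)]scale0r [in X in _ = _ + X]addr0.
rewrite -big_split /=.
apply: eq_bigr => i _.
rewrite [X in X + _ = _]L_scale [X in _ + X = _]L_scale /T.
rewrite [X in _ *: X + _ = _]L_bT [X in _ + _ *: X = _]L_bT !G_eq /=.
have hi : (i <= m)%N by rewrite -ltnS ltn_ord.
rewrite [X in X + _ = _]scalerA [X in _ + X = _]scalerA.
apply: (f_equal2 +%R); apply: (f_equal2 (@GRing.scale _ _)); try apply: f_equal.

- by rewrite ?mul1r ?mul0r ?expr0z ?mulr1 ?add0n.
- by rewrite /bump leq0n add1n add0n addr0 -intS subSS.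
- by rewrite ?mul1r ?mul0r ?expr0z ?mul1r mulrC.
- by rewrite !add0n addr0 add0r add1n subSn.
Qed.

Lemma Dbas_sum (a : int) M : Delta_bas q (a, M) =
  \sum_(i < M.+1) d M i *: bT ((a, (i : nat)), (a + Posz i, (M - i)%N)).
Proof.
rewrite /Delta_bas /= -/(Dpow M) mulT_L basT_lock L_bT Dpow_sum L_sum.
apply: eq_bigr => i _.
rewrite L_scale /T L_bT G_eq /=.
rewrite [X in _ *: (X *: _)](_ : _ = 1) ?scale1r; last first.
  by rewrite ?mul0r ?expr0z ?mulr1.
do 2 apply: f_equal.
by rewrite !add0n !addr0.
Qed.

Lemma Dbas_coef (a : int) M b i c j :
  (Delta_bas q (a, M))@_((b, i), (c, j)) =
  ((b == a) && (c == a + Posz i) && (M == i + j)%N)%:R * d M i.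
Proof.
rewrite Dbas_sum (big_morph (mcoeff _) (@mcoeffD _ _ _) (@mcoeff0 _ _ _)).
under eq_bigr => i' _ do rewrite mcoeffZ bT_coef.
case: (ltnP M i) => hMi.
  rewrite (_ : (M == i + j)%N = false) ?andbF ?mul0r; last first.
    by apply/negbTE; rewrite neq_ltn (leq_trans hMi) // leq_addr.
  apply: big1 => i' _; rewrite !xpair_eqE.
  rewrite (_ : (i' == i :> nat) = false) ?andbF /= ?mulr0 //.
  by apply/negbTE; rewrite neq_ltn (leq_trans (ltn_ord i')).
have hi : (i < M.+1)%N by [].
rewrite (bigD1 (Ordinal hi)) //= big1 ?addr0.
  rewrite mulrC; congr (_%:R * _); congr (nat_of_bool _); apply/idP/idP.
    by move/eqP => [-> -> <-]; rewrite (subnKC hMi) !eqxx.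
  by case/andP => /andP [/eqP -> /eqP ->] /eqP ->; rewrite addKn.
move=> i' hi'; rewrite !xpair_eqE.
rewrite (_ : (i' == i :> nat) = false) ?andbF /= ?mulr0 //.
by apply/negbTE; move: hi'; apply: contra => /eqP h; apply/eqP/val_inj.
Qed.

Lemma d_m0 m : d m 0 = 1.
Proof. by elim: m => [|m IH] //=; rewrite IH expr0 mulr1 add0r. Qed.

Lemma d_mm m : d m m = 1.
Proof. by elim: m => [|m IH] //=; rewrite IH d_gt // mulr0 addr0. Qed.

Lemma d_1 m : (1 - q) * d m 1 = 1 - q ^+ m.
Proof.
elim: m => [|m IH]; first by rewrite /= mulr0 expr0 subrr.
rewrite /= d_m0 expr1 exprS.
transitivity ((1 - q) + q * ((1 - q) * d m 1)); first ring.
rewrite IH; ring.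
Qed.

Lemma Delta_coef (w : Hq k) b i c j :
  (Delta q w)@_((b, i), (c, j)) =
  w@_(b, (i + j)%N) * ((c == b + Posz i)%:R * d (i + j) i).
Proof.
rewrite Delta_L L_coef (@collapse _ _ _ _ (b, (i + j)%N)).
  by rewrite Dbas_coef !eqxx /= andbT.
case=> a1 a2 ha; rewrite Dbas_coef.
case: (ltnP a2 i) => hi; first by rewrite d_gt // mulr0.
rewrite (_ : (b == a1) && (c == a1 + Posz i) && (a2 == i + j)%N = false) ?mul0r //.
apply/negbTE; apply: contra ha => /andP [/andP [/eqP -> _] /eqP ->].
by [].
Qed.

Lemma tens_bH_l a0 (v : Hq k) b c :
  (tens (bH a0) v)@_(b, c) = (a0 == b)%:R * v@_c.
Proof.
rewrite tens_L L_bH L_coef (@collapse _ _ _ _ c).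
  by rewrite bT_coef xpair_eqE eqxx andbT mulrC.
move=> a ha; rewrite bT_coef xpair_eqE.
by rewrite (negbTE ha) andbF.
Qed.

Lemma tens_bH_r (u : Hq k) a0 b c :
  (tens u (bH a0))@_(b, c) = u@_b * (a0 == c)%:R.
Proof.
rewrite tens_L L_coef (@collapse _ _ _ _ b).
  by rewrite L_bH bT_coef xpair_eqE eqxx.
move=> a ha; rewrite L_bH bT_coef xpair_eqE.
by rewrite (negbTE ha).
Qed.

Lemma tens_bH_bH a b : tens (bH a) (bH b) = bT (a, b).
Proof. by rewrite tens_L L_bH L_bH. Qed.

Fact tL_key : unit. Proof. exact: tt. Qed.
Definition tL := locked_with tL_key (@tens k).
Lemma tens_lock : @tens k = tL. Proof. by rewrite /tL; case: tL_key. Qed.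

Lemma tL_bH_l a0 (v : Hq k) b c :
  (tL (bH a0) v)@_(b, c) = (a0 == b)%:R * v@_c.
Proof. by rewrite -tens_lock tens_bH_l. Qed.

Lemma tL_bH_r (u : Hq k) a0 b c :
  (tL u (bH a0))@_(b, c) = u@_b * (a0 == c)%:R.
Proof. by rewrite -tens_lock tens_bH_r. Qed.

Lemma pair_natr (x b y c : idx) :
  ((x, y) == (b, c))%:R = (x == b)%:R * (y == c)%:R :> k.
Proof. by rewrite xpair_eqE; case: (x == b); case: (y == c); rewrite ?mulr1 ?mulr0. Qed.

End Spec.

Lemma sum_diff (V : zmodType) m (f g : nat -> V) :
  (forall i, (0 < i)%N -> (i < m.+2)%N -> f i = g i) ->
  \sum_(i < m.+3) f i = \sum_(i < m.+3) g i + (f 0%N - g 0%N) + (f m.+2 - g m.+2).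
Proof.
move=> hfg.
rewrite big_ord_recl big_ord_recr /= [in RHS]big_ord_recl [in RHS]big_ord_recr /=.
rewrite (eq_bigr (fun i : 'I_m.+1 => g (bump 0 i))); last first.
  by move=> i _; rewrite hfg // /bump /= add1n ltnS.
set S := (\sum_(i < m.+1) _)%R.
rewrite /bump /= !add1n.
set x0 := f 0%N; set y0 := g 0%N; set x1 := f m.+2; set y1 := g m.+2.
rewrite -[RHS]addrA addrACA [y0 + _]addrC subrK.
by rewrite addrACA subrr addr0.
Qed.



Lemma keyeq (k : fieldType) (Dw Dph Dh A B : HH k) :
  Dph = Dh + Dw -> Dph = Dh + A + B -> Dw = A + B.
Proof. by move=> -> /eqP; rewrite -addrA (inj_eq (addrI _)) => /eqP. Qed.

Lemma coefDB (k : fieldType) (U A B X Y : HH k) t :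
  U = (A - X) + (B - Y) -> U@_t = (A@_t - X@_t) + (B@_t - Y@_t).
Proof. by move=> ->; rewrite mcoeffD !mcoeffB. Qed.

Unset Implicit Arguments.

Lemma key_w (k : fieldType) (q : k)
    (m : nat) (phi : Hq k -> Hq k)
    (hphi : in_Aut q m.+1 phi) (n : int) (w : Hq k)
    (hw : phi (bH k (n, m.+2)) = bH k (n, m.+2) + w) :
  forall b i c j,
  w@_(b, (i + j)%N) * ((c == b + Posz i)%:R * d q (i + j) i) =
  ((n, 0%N) == (b, i))%:R * w@_(c, j) + w@_(b, i) * ((n + Posz m.+2, 0%N) == (c, j))%:R.
Proof.
move=> b i c j.
case: hphi => [[hlin hbij hDelta heps] hfix].
have fixb : forall a : idx, (a.2 <= m.+1)%N -> phi (bH k a) = bH k a.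
  move=> a ha; apply: hfix => a'; rewrite -bas_lock /bas msuppU oner_eq0.
  by rewrite in_fset1 => /eqP ->.
have H1 := hDelta (bH k (n, m.+2)).
have Dh : Delta q (bH k (n, m.+2)) = \sum_(i < m.+3) d q m.+2 i *: bT k ((n, (i : nat)), (n + Posz i, (m.+2 - i)%N)).
  by rewrite Delta_L L_bH Dbas_sum.
have Th : tmap phi phi (Delta q (bH k (n, m.+2))) = \sum_(i < m.+3) d q m.+2 i *:
    tens (phi (bH k (n, (i : nat)))) (phi (bH k (n + Posz i, (m.+2 - i)%N))).
  rewrite Dh tmap_L L_sum; apply: eq_bigr => i' _.
  by rewrite L_scale L_bT.
pose F2 := fun i : nat => d q m.+2 i *:
    tens (phi (bH k (n, i))) (phi (bH k (n + Posz i, (m.+2 - i)%N))).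
pose F1 := fun i : nat => d q m.+2 i *: bT k ((n, i), (n + Posz i, (m.+2 - i)%N)).
have Sd : \sum_(i < m.+3) F2 i = \sum_(i < m.+3) F1 i + (F2 0%N - F1 0%N) + (F2 m.+2 - F1 m.+2).
  apply: sum_diff => i0 hi0 hi0'.
  rewrite /F2 /F1 fixb ?fixb ?tens_bH_bH //=; clear -hi0; lia.
have e0 : F2 0%N = tens (bH k (n, 0%N)) (phi (bH k (n, m.+2))).
  rewrite /F2 d_m0 (scale1r (tens _ _)) fixb; last by [].
  by rewrite (addr0 n) subn0.
have e0' : F1 0%N = bT k ((n, 0%N), (n, m.+2)).
  by rewrite /F1 d_m0 (scale1r (bT _ _)) (addr0 n) subn0.
have es : F2 m.+2 = tens (phi (bH k (n, m.+2))) (bH k (n + Posz m.+2, 0%N)).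
  rewrite /F2 d_mm (scale1r (tens _ _)) subnn [X in tens _ X]fixb; last by [].
  reflexivity.
have es' : F1 m.+2 = bT k ((n, m.+2), (n + Posz m.+2, 0%N)).
  by rewrite /F1 d_mm (scale1r (bT _ _)) subnn.
have E : Delta q (phi (bH k (n, m.+2))) =
    Delta q (bH k (n, m.+2)) + (F2 0%N - F1 0%N) + (F2 m.+2 - F1 m.+2).
  rewrite [X in _ = X + _ + _]Dh. exact: (etrans H1 (etrans Th Sd)).
have Dw : Delta q (phi (bH k (n, m.+2))) = Delta q (bH k (n, m.+2)) + Delta q w.
  rewrite !Delta_L hw L_add. reflexivity.
have KEY : Delta q w = (tens (bH k (n, 0%N)) (phi (bH k (n, m.+2))) - bT k ((n, 0%N), (n, m.+2)))
   + (tens (phi (bH k (n, m.+2))) (bH k (n + Posz m.+2, 0%N)) - bT k ((n, m.+2), (n + Posz m.+2, 0%N))).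
  rewrite -e0 -e0' -es -es'; exact: (keyeq Dw E).
rewrite tens_lock in KEY.
have C := coefDB ((b, i), (c, j)) KEY.
rewrite Delta_coef tL_bH_l tL_bH_r !bT_coef !pair_natr hw !mcoeffD !bH_coef in C.
rewrite C; ring.
Qed.

Lemma addsub (V : zmodType) (x y : V) : x = y + (x - y).
Proof. by rewrite addrC subrK. Qed.

Lemma d_neq0 (k : fieldType) (q : k) (hq : forall n : nat, (0 < n)%N -> q ^+ n != 1)
  M : (0 < M)%N -> d q M 1 != 0.
Proof.
move=> hM; apply/eqP => h0; have := d_1 q M; rewrite h0 mulr0 => /eqP.
by rewrite eq_sym subr_eq0 eq_sym (negbTE (hq M hM)).
Qed.

Lemma solve0 (k : fieldType) (a b d X : k) :
  b * (0 * d) = 1 * a + b * X -> a = - b * (X - 0).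
Proof.
move=> h; have e : a = a + (b * (0 * d) - (1 * a + b * X)) by rewrite h subrr addr0.
by rewrite {1}e; ring.
Qed.

Lemma solve0' (k : fieldType) (a b X : k) : 0 = a + b * X -> a = - b * X.
Proof. by move=> h; apply/eqP; rewrite mulNr -addr_eq0 h. Qed.

Lemma coefZeq (k : fieldType) (c1 c2 : k) (v : Hq k) t :
  c1 *: v = c2 *: v -> c1 * v@_t = c2 * v@_t.
Proof. by move=> h; rewrite -!mcoeffZ h. Qed.

Lemma int_ne (n : int) (p r : nat) : p != r -> (n + Posz p == n + Posz r) = false.
Proof. by move=> h; rewrite (inj_eq (@addrI _ n)) eqz_nat (negbTE h). Qed.

Theorem lemma3p5 (k : fieldType) (q : k) (hq0 : q != 0)
    (hq : forall n : nat, (0 < n)%N -> q ^+ n != 1)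
    (s : nat) (hs : (2 <= s)%N) (phi : Hq k -> Hq k)
    (hphi : in_Aut q s.-1 phi) :
  exists! beta : int -> k, forall n : int,
    phi (bas k (n, s)) =
      bas k (n, s) + beta n *: (bas k (n + s%:Z, 0%N) - bas k (n, 0%N)).
Proof.
have [m hm] : exists m, s = m.+2 by exists s.-2; case: s hs {hphi} => [|[|s]].
subst s.
rewrite bas_lock.
have [w hw] : exists w : int -> Hq k, forall n, phi (bH k (n, m.+2)) = bH k (n, m.+2) + w n.
  by exists (fun n => phi (bH k (n, m.+2)) - bH k (n, m.+2)) => n; exact: addsub.
have hn0 : forall n : int, (n + Posz m.+2 == n) = false.
  by move=> n; rewrite -[X in _ == X]addr0 (int_ne n m.+2 0).
have KW n : w n = (- (w n)@_(n, 0%N)) *: (bH k (n + Posz m.+2, 0%N) - bH k (n, 0%N)).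
  have C := @key_w _ _ _ _ hphi n (w n) (hw n).
  apply/malgP => [[b M]].
  rewrite mcoeffZ mcoeffB !bH_coef.
  case: M => [|[|M]].
  - case: (eqVneq b n) => [->|hbn].
      by rewrite !xpair_eqE hn0 !eqxx /=; ring.
    have := C n 0%N b 0%N.
    rewrite addr0 (negbTE hbn) !xpair_eqE [n == b]eq_sym (negbTE hbn) !eqxx /= => h.
    move: h; rewrite add0n ?andbT ?mulr0n ?mulr1n ?mul0r ?mulr0 ?mul1r ?subr0 => h.
    exact: (solve0' _ _ _ _ h).
  - rewrite !xpair_eqE !andbF /= subrr mulr0.
    have C1 := C b 1%N (b + Posz 1) 0%N.
    have C2 := C b 0%N b 1%N.
    rewrite addn0 eqxx d_mm !xpair_eqE andbF /= in C1.
    rewrite add0n addr0 eqxx d_m0 !xpair_eqE in C2.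
    case: (eqVneq b n) => [eb|hbn].
      rewrite eb (int_ne n m.+2 1) // in C1.
      move: C1; rewrite /= ?andbF ?andbT ?mulr0n ?mulr1n ?mul0r ?mulr0 ?mul1r ?mulr1 ?add0r ?addr0.
      by rewrite eb.
    rewrite [n == b]eq_sym (negbTE hbn) /= in C2.
    move: C2; rewrite /= ?andbF ?andbT ?mulr0n ?mulr1n ?mul0r ?mulr0 ?mul1r ?mulr1 ?add0r ?addr0.
    by [].
  - rewrite !xpair_eqE !andbF /= subrr mulr0.
    have C3 := C b 1%N (b + Posz 1) M.+1.
    rewrite eqxx add1n in C3.
    have hd := d_neq0 k q hq M.+2 isT.
    move: C3 hd; move: (d q M.+2 1) => dd C3 hd.
    rewrite !xpair_eqE !andbF /= in C3.
    move: C3; rewrite ?andbF ?andbT ?mulr0n ?mulr1n ?mul0r ?mulr0 ?mul1r ?mulr1 ?add0r ?addr0.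
    move/eqP; rewrite mulf_eq0 (negbTE hd) orbF.
    by move/eqP.
exists (fun n => - (w n)@_(n, 0%N)); split.
  move=> n; exact: (etrans (hw n) (f_equal (fun x => bH k (n, m.+2) + x) (KW n))).
move=> beta' hb'; apply: functional_extensionality => n.
have E := etrans (esym (hw n)) (hb' n).
move/addrI: E => E.
have E2 := coefZeq k _ _ _ (n + Posz m.+2, 0%N) (etrans (esym (KW n)) E).
rewrite mcoeffB !bH_coef eqxx !xpair_eqE eq_sym hn0 /= in E2.
move: E2; rewrite ?mulr0n ?mulr1n ?subr0 ?mulr1.
by [].
Qed.
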